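(* Let $n_A,n_B\ge1$, $\Delta\ge 0$, and let $H\in\mathbb{C}^{(n_An_B)\times(n_An_B)}$ be a Hermitian matrix (the announced payoff Hamiltonian, on $\mathbb{C}^{n_A}\otimes\mathbb{C}^{n_B}$). Let $$\Phi(H)=\operatorname*{arg\,max}_{\rho_B\in\mathcal{P}_B}\ \min_{\rho_A\in\mathcal{P}_A}\operatorname{tr}\big((\rho_A\otimes\rho_B)H\big)$$ be the set of security strategies of the maximizing player $B$ (the ''naive victim'') in the zero-sum game with payoff $\operatorname{tr}((\rho_A\otimes\rho_B)H)$, and let $$\Phi_r(H)=\operatorname*{arg\,max}_{\rho_B\in\mathcal{P}_B}\ \min_{\rho_A\in\mathcal{P}_A,\ D\in\mathcal{D}}\operatorname{tr}\big((\rho_A\otimes\rho_B)(H-D)\big)$$ be the set of strategies of a ''robust victim'' who optimizes the worst-case outcome over all true Hamiltonians $H-D$ consistent with the announced $H$ and the deception budget. Then $\Phi(H)=\Phi_r(H)$.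
   Context: $\mathcal{P}_A$ (resp. $\mathcal{P}_B$) is the set of $n_A\times n_A$ (resp. $n_B\times n_B$) complex density matrices, i.e. positive semidefinite matrices of trace one. The deception set is $\mathcal{D}=\{D\in\mathbb{C}^{(n_An_B)\times(n_An_B)}: D=D^\dagger,\ \|D\|_1\le\Delta\}$, where $\|A\|_1=\sup_{\|x\|_1=1}\|Ax\|_1$ is the matrix norm induced by the vector $1$-norm. Player $A$ (the deceiver) is the minimizer and player $B$ (the victim) the maximizer. *)

(* Defs.v *)
From HB Require Import structures.
From mathcomp Require Import all_boot all_order all_algebra.
From mathcomp Require Import complex mxtens.
From mathcomp Require Import classical_sets reals.
Set Implicit Arguments.
Unset Strict Implicit.
Unset Printing Implicit Defensive.
Import Order.TTheory GRing.Theory Num.Theory.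
Local Open Scope ring_scope.
Local Open Scope classical_set_scope.

Section Defs.
Variable R : realType.
Local Notation C := R[i].

Definition adjmx {m n} (A : 'M[C]_(m, n)) : 'M[C]_(n, m) :=
  \matrix_(i, j) conjc (A j i).

Definition herm_mx {n} (A : 'M[C]_n) : Prop := adjmx A = A.

Definition psd {n} (A : 'M[C]_n) : Prop :=
  herm_mx A /\ forall x : 'cV[C]_n, 0 <= (adjmx x *m A *m x) 0 0.

Definition density {n} (A : 'M[C]_n) : Prop := psd A /\ \tr A = 1.

Definition vnorm1 {n} (x : 'cV[C]_n) : R := \sum_i Normc.normc (x i 0).

Definition opnorm1 {n} (D : 'M[C]_n) : R :=
  sup [set vnorm1 (D *m x) | x in [set x : 'cV[C]_n | vnorm1 x = 1]].

Definition deception (nA nB : nat) (Delta : R) : set 'M[C]_(nA * nB) :=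
  [set D | herm_mx D /\ opnorm1 D <= Delta].

Definition payoff {nA nB} (rA : 'M[C]_nA) (rB : 'M[C]_nB)
  (H : 'M[C]_(nA * nB)) : R := complex.Re (\tr ((rA *t rB) *m H)).

Definition naive_value {nA nB} (H : 'M[C]_(nA * nB)) (rB : 'M[C]_nB) : R :=
  inf [set payoff rA rB H | rA in [set rA : 'M[C]_nA | density rA]].

Definition robust_value {nA nB} (Delta : R) (H : 'M[C]_(nA * nB))
  (rB : 'M[C]_nB) : R :=
  inf [set payoff p.1 rB (H - p.2) |
        p in [set p : 'M[C]_nA * 'M[C]_(nA * nB) |
                density p.1 /\ @deception nA nB Delta p.2]].

Definition argmax_density {n} (f : 'M[C]_n -> R) : set 'M[C]_n :=
  [set rB | density rB /\ forall rB', density rB' -> f rB' <= f rB].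

Definition Phi {nA nB} (H : 'M[C]_(nA * nB)) : set 'M[C]_nB :=
  argmax_density (naive_value H).

Definition Phi_r {nA nB} (Delta : R) (H : 'M[C]_(nA * nB)) : set 'M[C]_nB :=
  argmax_density (robust_value Delta H).
End Defs.

(* Main.v *)
Require Import Defs.
From HB Require Import structures.
From mathcomp Require Import all_boot all_order all_algebra.
From mathcomp Require Import complex mxtens.
From mathcomp Require Import classical_sets reals.
From mathcomp Require Import ring lra.
Set Implicit Arguments.
Unset Strict Implicit.
Unset Printing Implicit Defensive.
Import Order.TTheory GRing.Theory Num.Theory.
Local Open Scope ring_scope.

Section Aux.
Variable R : realType.
Local Notation C := R[i].
Local Notation nc := (@Normc.normc R).

Lemma ReD (x y : C) : complex.Re (x + y) = complex.Re x + complex.Re y.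
Proof. by case: x; case: y. Qed.
Lemma ReN (x : C) : complex.Re (- x) = - complex.Re x.
Proof. by case: x. Qed.

Lemma Re_sum (I : Type) (r : seq I) (P : pred I) (F : I -> C) :
  complex.Re (\sum_(i <- r | P i) F i) = \sum_(i <- r | P i) complex.Re (F i).
Proof. by apply: (big_morph _ ReD). Qed.

Lemma nc_ge0 (z : C) : 0 <= nc z.
Proof. by case: z => a b; exact: sqrtr_ge0. Qed.

Lemma nc_sq (z : C) : nc z ^+ 2 = complex.Re z ^+ 2 + complex.Im z ^+ 2.
Proof. by case: z => a b /=; rewrite sqr_sqrtr // addr_ge0 ?sqr_ge0. Qed.

Lemma Re_le_nc (z : C) : complex.Re z <= nc z.
Proof.
have h1 := nc_ge0 z; have h2 := nc_sq z.
have h3 : 0 <= complex.Im z ^+ 2 by rewrite sqr_ge0.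
nra.
Qed.

Lemma amgm (p x y : R) : 0 <= p -> 0 <= x -> 0 <= y -> p ^+ 2 <= x * y -> p <= (x + y) / 2.
Proof. move=> hp hx hy h. have : 0 <= (x - y) ^+ 2 by rewrite sqr_ge0. nra. Qed.

Lemma ReM0 (z w : C) : complex.Im z = 0 -> complex.Im w = 0 ->
  complex.Re (z * w) = complex.Re z * complex.Re w /\ complex.Im (z * w) = 0.
Proof. by case: z => a b; case: w => c d /= -> ->; rewrite !mulr0 !mul0r subr0 addr0. Qed.

Lemma nc_conj (z : C) : nc (conjc z) = nc z.
Proof. by case: z => a b /=; rewrite sqrrN. Qed.

Lemma nc_sum (I : Type) (r : seq I) (P : pred I) (F : I -> C) :
  nc (\sum_(i <- r | P i) F i) <= \sum_(i <- r | P i) nc (F i).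
Proof.
elim/big_rec2: _ => [|i y1 y2 _ IH]; first by rewrite Normc.normc0.
apply: le_trans (le_normcD _ _) _; exact: lerD.
Qed.

Definition nice n (r : 'M[C]_n) :=
  [/\ forall i, complex.Im (r i i) = 0 /\ 0 <= complex.Re (r i i),
      \sum_i complex.Re (r i i) = 1
    & forall i j, nc (r i j) ^+ 2 <= complex.Re (r i i) * complex.Re (r j j)].

Lemma nice_bound n (r D : 'M[C]_n) (M : R) : nice r ->
  (forall j, \sum_i nc (D i j) <= M) -> (forall i, \sum_j nc (D i j) <= M) ->
  complex.Re (\tr (r *m D)) <= M.
Proof.
move=> [hd hs hc] hcol hrow.
pose d i := complex.Re (r i i).
have dge0 i : 0 <= d i by case: (hd i).
have step1 : complex.Re (\tr (r *m D)) <=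
    \sum_i \sum_j ((d i / 2) * nc (D j i) + (d j / 2) * nc (D j i)).
  rewrite /mxtrace Re_sum; apply: ler_sum => i _; rewrite mxE Re_sum.
  apply: ler_sum => j _; apply: le_trans (Re_le_nc _) _.
  rewrite Normc.normcM -mulrDl -mulrDl; apply: ler_wpM2r; first exact: nc_ge0.
  exact: amgm (nc_ge0 _) (dge0 i) (dge0 j) (hc i j).
apply: le_trans step1 _.
rewrite (eq_bigr (fun i => d i / 2 * \sum_j nc (D j i) + \sum_j d j / 2 * nc (D j i))); last first.
  by move=> i _; rewrite big_split /= mulr_sumr.
rewrite big_split /= exchange_big /=.
under [X in _ + X]eq_bigr do rewrite -mulr_sumr.
have h1 : \sum_i d i / 2 * \sum_j nc (D j i) <= \sum_i d i / 2 * M.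
  apply: ler_sum => i _; apply: ler_wpM2l; last exact: hcol.
  by rewrite divr_ge0.
have h2 : \sum_j d j / 2 * \sum_i nc (D j i) <= \sum_i d i / 2 * M.
  apply: ler_sum => i _; apply: ler_wpM2l; last exact: hrow.
  by rewrite divr_ge0.
have e : \sum_i d i / 2 * M = M / 2.
  by rewrite -mulr_suml -mulr_suml hs; field.
apply: le_trans (lerD h1 h2) _; rewrite e; lra.
Qed.

Lemma tr_tens m n (A : 'M[C]_m) (B : 'M[C]_n) : \tr (A *t B) = \tr A * \tr B.
Proof. by rewrite /mxtrace mulr_sum; apply: eq_bigr => k _; rewrite mxE. Qed.

Lemma nice_tens m n (A : 'M[C]_m) (B : 'M[C]_n) : nice A -> nice B -> nice (A *t B).
Proof.
move=> [ad aS ac] [bd bs bc].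
have diag k : complex.Re ((A *t B) k k) =
   complex.Re (A (mxtens_unindex k).1 (mxtens_unindex k).1) *
   complex.Re (B (mxtens_unindex k).2 (mxtens_unindex k).2) /\
   complex.Im ((A *t B) k k) = 0.
  by rewrite mxE; apply: ReM0; [case: (ad (mxtens_unindex k).1) | case: (bd (mxtens_unindex k).2)].
split.
- move=> k; have [-> ->] := diag k; split=> //.
  by apply: mulr_ge0; [case: (ad (mxtens_unindex k).1) | case: (bd (mxtens_unindex k).2)].
- transitivity ((\sum_i complex.Re (A i i)) * (\sum_j complex.Re (B j j)));
    last by rewrite aS bs mulr1.
  by rewrite mulr_sum; apply: eq_bigr => k _; exact: (proj1 (diag k)).
- move=> k l; rewrite (proj1 (diag k)) (proj1 (diag l)) mxE Normc.normcM exprMn.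
  set a1 := complex.Re (A _ _); set a2 := complex.Re (A _ _).
  set b1 := complex.Re (B _ _); set b2 := complex.Re (B _ _).
  have -> : a1 * b1 * (a2 * b2) = (a1 * a2) * (b1 * b2) by ring.
  apply: ler_pM; rewrite ?sqr_ge0 //.
Qed.

Lemma qform n (A : 'M[C]_n) (x : 'cV[C]_n) :
  (adjmx x *m A *m x) 0 0 = \sum_l \sum_k conjc (x l 0) * A l k * x k 0.
Proof.
rewrite mxE exchange_big /=; apply: eq_bigr => k _; rewrite mxE mulr_suml.
by apply: eq_bigr => l _; rewrite !mxE.
Qed.

Lemma sum2 n (i j : 'I_n) (f : 'I_n -> C) : i != j ->
  (forall k, k != i -> k != j -> f k = 0) -> \sum_k f k = f i + f j.
Proof.
move=> ij hf; rewrite (bigD1 i) //= (bigD1 j) 1?eq_sym //= big1 ?addr0 //.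
by move=> k /andP[ki kj]; apply: hf.
Qed.

Lemma sum1 n (i : 'I_n) (f : 'I_n -> C) :
  (forall k, k != i -> f k = 0) -> \sum_k f k = f i.
Proof. by move=> hf; rewrite (bigD1 i) //= big1 ?addr0. Qed.

Lemma herm_entry n (A : 'M[C]_n) i j : herm_mx A -> A j i = conjc (A i j).
Proof. by move=> hA; rewrite -{1}hA mxE. Qed.

Lemma cs_real (a d m : R) : 0 <= a -> 0 <= d -> 0 <= m ->
  0 <= d ^+ 2 * a + d * m - 2 * d * m ->
  0 <= m ^+ 2 * a + (a + 1) ^+ 2 * m * d - 2 * m * (a + 1) * m ->
  m <= a * d.
Proof.
move=> ha hd hm h1 h2.
have [d0|dpos] := eqVneq d 0.
  subst d. have : m ^+ 2 * (a + 2) <= 0 by nra.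
  move=> h; have : m ^+ 2 <= 0 by nra. nra.
have dp : 0 < d by rewrite lt_def dpos hd.
nra.
Qed.

Lemma density_nice n (A : 'M[C]_n) : density A -> nice A.
Proof.
move=> [[hA hpsd] htr].
have hdiag i : complex.Im (A i i) = 0 /\ 0 <= complex.Re (A i i).
  have := hpsd (\col_k ((k == i)%:R)).
  rewrite qform (@sum1 _ i); last first.
    by move=> l li; apply: big1 => k _; rewrite !mxE (negPf li) conjc0 !mul0r.
  rewrite (@sum1 _ i); last by move=> k ki; rewrite !mxE (negPf ki) mulr0.
  rewrite !mxE eqxx conjc1 mul1r mulr1 lecE /= => /andP[/eqP <- ->]; done.
split => //.
  by rewrite -Re_sum; have := congr1 (@complex.Re R) htr; rewrite /mxtrace.
move=> i j.
have [<-|ij] := eqVneq i j.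
  rewrite nc_sq (proj1 (hdiag i)); nra.
have [ia ia0] := hdiag i; have [jd jd0] := hdiag j.
set a := complex.Re (A i i) in ia0 *; set d := complex.Re (A j j) in jd0 *.
set p := complex.Re (A i j); set q := complex.Im (A i j).
have Eii : A i i = Complex a 0 by rewrite -ia /a; case: (A i i).
have Ejj : A j j = Complex d 0 by rewrite -jd /d; case: (A j j).
have Eij : A i j = Complex p q by rewrite /p /q; case: (A i j).
have Eji : A j i = Complex p (- q) by rewrite (herm_entry _ _ hA) Eij.
have key (s t : R) : 0 <= s ^+ 2 * a + t ^+ 2 * (p ^+ 2 + q ^+ 2) * d - 2 * s * t * (p ^+ 2 + q ^+ 2).
  have := hpsd (\col_k (if k == i then Complex s 0 else if k == j then Complex (- (t * p)) (t * q) else 0)).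
  have hx k : k != i -> k != j -> (\col_k (if k == i then Complex s 0 else if k == j then Complex (- (t * p)) (t * q) else 0) : 'cV[C]_n) k 0 = 0.
    by move=> ki kj; rewrite mxE (negPf ki) (negPf kj).
  rewrite qform (sum2 ij); last first.
    by move=> l li lj; apply: big1 => k _; rewrite (hx l li lj) conjc0 !mul0r.
  rewrite !(sum2 ij); last first.
    by move=> k ki kj; rewrite (hx k ki kj) mulr0.
    by move=> k ki kj; rewrite (hx k ki kj) mulr0.
  rewrite !mxE [j == i]eq_sym (negPf ij) !eqxx Eii Ejj Eij Eji.
  rewrite lecE => /andP[_]; rewrite /=.
  set L := (X in 0 <= X -> _); set Rr := (X in _ -> 0 <= X).
  suff -> : Rr = L by [].
  rewrite /L /Rr; ring.
have k1 := key d 1; have k2 := key (p ^+ 2 + q ^+ 2) (a + 1).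
rewrite nc_sq -/p -/q.
apply: cs_real => //.
- by rewrite addr_ge0 ?sqr_ge0.
- by move: k1; rewrite expr1n mul1r mulr1 [d * _]mulrC.
Qed.

Local Open Scope classical_set_scope.

Definition ev n (j : 'I_n) : 'cV[C]_n := \col_k ((k == j)%:R).

Lemma vnorm1_ev n (j : 'I_n) : vnorm1 (ev j) = 1.
Proof.
rewrite /vnorm1 (bigD1 j) //= mxE eqxx Normc.normc1 big1 ?addr0 //.
by move=> k kj; rewrite mxE (negPf kj) Normc.normc0.
Qed.

Lemma nc_le_vnorm1 n (x : 'cV[C]_n) k : nc (x k 0) <= vnorm1 x.
Proof.
rewrite /vnorm1 (bigD1 k) //= lerDl; apply: sumr_ge0 => i _; exact: nc_ge0.
Qed.

Lemma vnorm1_ub n (D : 'M[C]_n) :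
  has_ubound [set vnorm1 (D *m x) | x in [set x : 'cV[C]_n | vnorm1 x = 1]].
Proof.
exists (\sum_i \sum_k nc (D i k)) => y [x hx <-].
rewrite /vnorm1; apply: ler_sum => i _; rewrite mxE.
apply: le_trans (nc_sum _ _ _) _; apply: ler_sum => k _.
rewrite Normc.normcM; apply: ler_piMr; first exact: nc_ge0.
by rewrite -hx nc_le_vnorm1.
Qed.

Lemma col_le_opnorm n (D : 'M[C]_n) j : \sum_i nc (D i j) <= opnorm1 D.
Proof.
rewrite /opnorm1; apply: (ub_le_sup (vnorm1_ub D)).
exists (ev j); first exact: vnorm1_ev.
rewrite /vnorm1; apply: eq_bigr => i _; rewrite mxE (@sum1 _ j).
  by rewrite mxE eqxx mulr1.
by move=> k kj; rewrite mxE (negPf kj) mulr0.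
Qed.

Lemma decep_bound nA nB Delta (r : 'M[C]_(nA * nB)) D : nice r ->
  @deception R nA nB Delta D -> complex.Re (\tr (r *m D)) <= Delta.
Proof.
move=> hr [hD hn]; apply: nice_bound => //.
  by move=> j; apply: le_trans (col_le_opnorm _ _) hn.
move=> i; apply: le_trans _ (le_trans (col_le_opnorm D i) hn); rewrite le_eqVlt; apply/orP; left; apply/eqP.
by apply: eq_bigr => j _; rewrite (herm_entry _ _ hD) nc_conj.
Qed.

Lemma decep_scalar nA nB (Delta : R) : 0 <= Delta -> (0 < nA * nB)%N ->
  @deception R nA nB Delta ((Delta%:C)%C%:M).
Proof.
move=> hD hn; split.
  apply/matrixP => i j; rewrite !mxE eq_sym.
  by case: (i == j); rewrite ?mulr1n ?mulr0n ?conjc_real ?conjc0.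
rewrite /opnorm1; apply: ge_sup.
  exists (vnorm1 ((Delta%:C)%C%:M *m ev (Ordinal hn))).
  by exists (ev (Ordinal hn)) => //; exact: vnorm1_ev.
move=> y [x hx <-]; rewrite mul_scalar_mx /vnorm1.
under eq_bigr do rewrite mxE Normc.normcM.
rewrite -mulr_sumr; have -> : \sum_i nc (x i 0) = 1 := hx.
rewrite mulr1 /= expr0n /= addr0 sqrtr_sqr ger0_norm //.
Qed.

Lemma single_le_sum n (f : 'I_n -> R) k : (forall i, 0 <= f i) -> f k <= \sum_i f i.
Proof. by move=> h; rewrite (bigD1 k) //= lerDl; apply: sumr_ge0. Qed.

Lemma payoff_sub nA nB (rA : 'M[C]_nA) (rB : 'M[C]_nB) (H D : 'M[C]_(nA * nB)) :
  payoff rA rB (H - D) = payoff rA rB H - complex.Re (\tr ((rA *t rB) *m D)).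
Proof. by rewrite /payoff mulmxBr raddfB /= ReD ReN. Qed.

Lemma payoff_shift nA nB (rA : 'M[C]_nA) (rB : 'M[C]_nB) (H : 'M[C]_(nA * nB)) (c : R) :
  \tr (rA *t rB) = 1 -> payoff rA rB (H - (c%:C)%C%:M) = payoff rA rB H - c.
Proof. by move=> htr; rewrite payoff_sub mul_mx_scalar mxtraceZ htr mulr1. Qed.

Lemma payoff_lb nA nB (rA : 'M[C]_nA) (rB : 'M[C]_nB) (H : 'M[C]_(nA * nB)) :
  nice (rA *t rB) -> - (\sum_i \sum_j nc (H i j)) <= payoff rA rB H.
Proof.
move=> hn.
have := @nice_bound _ (rA *t rB) (- H) (\sum_i \sum_j nc (H i j)) hn.
rewrite mulmxN raddfN /= ReN.
have hc : forall j, \sum_i nc ((- H) i j) <= \sum_i \sum_j nc (H i j).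
  move=> j; apply: ler_sum => i _; rewrite mxE normcN.
  by apply: single_le_sum => k; exact: nc_ge0.
have hr : forall i, \sum_j nc ((- H) i j) <= \sum_i \sum_j nc (H i j).
  move=> i; under eq_bigr do rewrite mxE normcN.
  apply: (single_le_sum (f := fun i => \sum_j nc (H i j))) => k.
  by apply: sumr_ge0 => l _; exact: nc_ge0.
move=> /(_ hc hr); rewrite /payoff; lra.
Qed.

Lemma density_exists n : (0 < n)%N -> exists r : 'M[C]_n, density r.
Proof.
move=> hn; pose i0 := Ordinal hn.
exists (\matrix_(i, j) ((i == i0) && (j == i0))%:R).
have hh : herm_mx (\matrix_(i, j) ((i == i0) && (j == i0))%:R : 'M[C]_n).
  by apply/matrixP => i j; rewrite !mxE conjc_nat andbC.
split; [split=> // x |].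
  rewrite qform (@sum1 _ i0); last first.
    by move=> l li; apply: big1 => k _; rewrite mxE (negPf li) /= mulr0 mul0r.
  rewrite (@sum1 _ i0); last by move=> k ki; rewrite mxE (negPf ki) andbF mulr0 mul0r.
  by rewrite mxE eqxx mulr1 mulrC mulcJ_ge0.
rewrite /mxtrace (@sum1 _ i0); first by rewrite mxE eqxx.
by move=> k ki; rewrite mxE (negPf ki).
Qed.

Lemma robust_eq nA nB (Delta : R) (H : 'M[C]_(nA * nB)) (rB : 'M[C]_nB) :
  (0 < nA)%N -> (0 < nB)%N -> 0 <= Delta -> density rB ->
  robust_value Delta H rB = naive_value H rB - Delta.
Proof.
move=> hA hB hD dB.
have hn : (0 < nA * nB)%N by rewrite muln_gt0 hA.
have hnice : forall rA : 'M[C]_nA, density rA -> nice (rA *t rB).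
  by move=> rA dA; apply: nice_tens; apply: density_nice.
have htr : forall rA : 'M[C]_nA, density rA -> \tr (rA *t rB) = 1.
  by move=> rA dA; rewrite tr_tens (proj2 dA) (proj2 dB) mulr1.
set K := \sum_i \sum_j nc (H i j).
rewrite /robust_value /naive_value.
set N := [set payoff rA rB H | rA in _].
set S := [set payoff p.1 rB (H - p.2) | p in _].
have [rA0 dA0] := density_exists hA.
have hlbN : has_lbound N.
  by exists (- K) => y [rA dA <-]; apply: payoff_lb; apply: hnice.
have N0 : N !=set0 by exists (payoff rA0 rB H); exists rA0.
have hSin : forall rA : 'M[C]_nA, density rA -> S (payoff rA rB H - Delta).
  move=> rA dA; exists (rA, (Delta%:C)%C%:M); first by split=> //; exact: decep_scalar.
  by rewrite /= payoff_shift // htr.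
have hlbS : has_lbound S.
  exists (- K - Delta) => y [[rA D] [/= dA dD] <-].
  rewrite payoff_sub; have := decep_bound (hnice _ dA) dD.
  have := payoff_lb H (hnice _ dA); rewrite -/K; lra.
have S0 : S !=set0 by exists (payoff rA0 rB H - Delta); apply: hSin.
have h1 : inf N - Delta <= inf S.
  apply: lb_le_inf S0 _ => y [[rA D] [/= dA dD] <-].
  rewrite payoff_sub; have := decep_bound (hnice _ dA) dD.
  have : inf N <= payoff rA rB H by apply: (ge_inf hlbN); exists rA.
  lra.
have h2 : inf S + Delta <= inf N.
  apply: lb_le_inf N0 _ => y [rA dA <-].
  have := ge_inf hlbS (hSin rA dA); lra.
by apply: le_anti; rewrite h1 andbT lerBrDr.
Qed.

End Aux.

Theorem theorem1 (R : realType) (nA nB : nat) (Delta : R)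
  (H : 'M[R[i]]_(nA * nB)) :
  (0 < nA)%N -> (0 < nB)%N -> 0 <= Delta -> herm_mx H ->
  Phi H = Phi_r Delta H.
Proof.
move=> hA hB hD _.
apply/seteqP; split=> rB [dB hmax]; split=> // rB' dB'.
  rewrite (robust_eq (Delta:=Delta) H hA hB hD dB') (robust_eq (Delta:=Delta) H hA hB hD dB).
  rewrite lerD2r; exact: hmax.
have := hmax rB' dB'.
by rewrite (robust_eq (Delta:=Delta) H hA hB hD dB') (robust_eq (Delta:=Delta) H hA hB hD dB) lerD2r.
Qed.
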